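(* Let $f:\{0,1\}^n\to\{0,1\}^m$ be a fully balanced function with $r=\dim\operatorname{img}(f)\in\{1,2\}$. Consider the procedure: set $C=B=\varnothing$. Repeat: choose $\mathbf{y}\in\{0,1\}^m\setminus\langle C\cup B\rangle$ and query $\mathbf{y}$. If $\mathbf{y}\in C(f)$, add $\mathbf{y}$ to $C$. Otherwise, if $B=\varnothing$, add $\mathbf{y}$ to $B$; if $B\neq\varnothing$, take $\mathbf{s}\in B$, put $\mathbf{y}'=\mathbf{s}\oplus\mathbf{y}$ and query $\mathbf{y}'$: if $\mathbf{y}'\in C(f)$ add $\mathbf{y}'$ to $C$, otherwise add $\mathbf{y},\mathbf{y}'$ to $B$ and stop with output $r=2$. Whenever $\#C=m-1$, stop with output $r=1$. Then the procedure always outputs the correct value of $r$, using at most $2m-1$ oracle queries.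
   Context: Strings in $\{0,1\}^k$ are identified with vectors of $\mathbb{F}_2^k$; $\oplus$ is bitwise addition mod 2; $\mathbf{a}\cdot\mathbf{b}=\bigoplus_i a_ib_i$; $\langle X\rangle$ is the linear span of $X$. $f$ is $\mathbf{y}$-balanced if $f(\mathbf{x})\cdot\mathbf{y}=0$ for exactly half of the $\mathbf{x}$ and $=1$ for the other half, and $\mathbf{y}$-constant if $f(\mathbf{x})\cdot\mathbf{y}$ is the same for all $\mathbf{x}$. $f$ is fully balanced if for every $\mathbf{y}$ it is $\mathbf{y}$-balanced or $\mathbf{y}$-constant; then $\operatorname{img}(f)$ is an affine subspace. $C(f)=\{\mathbf{y}: f\text{ is }\mathbf{y}\text{-constant}\}$. A query on $\mathbf{y}$ reports whether $\mathbf{y}\in C(f)$ (one run of the Generalised Phase Kick-Back algorithm with marker $\mathbf{y}$, whose output is $\mathbf{0}$ exactly when $f$ is $\mathbf{y}$-constant, for fully balanced $f$). *)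

(* Defs.v *)
From HB Require Import structures.
From mathcomp Require Import all_boot all_order all_algebra.
From Stdlib Require Import Relations.
Set Implicit Arguments. Unset Strict Implicit. Unset Printing Implicit Defensive.
Import GRing.Theory.
Local Open Scope ring_scope.

(* Bit strings {0,1}^k as vectors of F_2^k (row vectors over 'F_2). *)
Definition vec (k : nat) := 'rV['F_2]_k.

Definition dot (k : nat) (a b : vec k) : 'F_2 := (a *m b^T) 0 0.

Section Balanced.
Variables (n m : nat) (f : vec n -> vec m).

Definition ycst (y : vec m) : bool :=
  [forall x : vec n, forall x' : vec n, dot (f x) y == dot (f x') y].

Definition ybal (y : vec m) : bool :=
  #|[set x : vec n | dot (f x) y == 0]| == #|[set x : vec n | dot (f x) y == 1]|.

Definition fully_balanced : Prop := forall y : vec m, ybal y || ycst y.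

Definition Cf : {set vec m} := [set y | ycst y].

(* dimension of the affine subspace img(f): dimension of its direction space
   span{ f x - f 0 | x } *)
Definition img_dim : nat := \dim <<[seq f x - f (0%R : vec n) | x : vec n]>>%VS.

(* States of the procedure: sets C, B (as lists) and number of queries so far,
   or a stopped state with the output and the number of queries used. *)
Inductive pstate :=
| Running of seq (vec m) & seq (vec m) & nat
| Stopped of nat & nat.

(* One step of the (nondeterministic) procedure; a query on y reports
   whether y \in Cf. *)
Inductive proc_step : pstate -> pstate -> Prop :=
| step_stop1 C B q :
    size C = m.-1 -> proc_step (Running C B q) (Stopped 1 q)
| step_addC C B q y :
    size C <> m.-1 -> y \notin <<C ++ B>>%VS -> y \in Cf ->
    proc_step (Running C B q) (Running (y :: C) B q.+1)
| step_addB C q y :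
    size C <> m.-1 -> y \notin <<C>>%VS -> y \notin Cf ->
    proc_step (Running C [::] q) (Running C [:: y] q.+1)
| step_addC' C B q y s :
    size C <> m.-1 -> y \notin <<C ++ B>>%VS -> y \notin Cf ->
    s \in B -> (s + y) \in Cf ->
    proc_step (Running C B q) (Running ((s + y) :: C) B q.+2)
| step_stop2 C B q y s :
    size C <> m.-1 -> y \notin <<C ++ B>>%VS -> y \notin Cf ->
    s \in B -> (s + y) \notin Cf ->
    proc_step (Running C B q) (Stopped 2 q.+2).

Definition init_state : pstate := Running [::] [::] 0.

Definition reachable (st : pstate) : Prop :=
  clos_refl_trans pstate proc_step init_state st.

End Balanced.
Arguments Stopped {m}.

(* Main.v *)
Require Import Defs.
From HB Require Import structures.
From mathcomp Require Import all_boot all_order all_algebra.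
From mathcomp Require Import zify.
From Stdlib Require Import Relations.
Local Open Scope ring_scope.
Import GRing.Theory.

Lemma F2cases (a : 'F_2) : a = 0 \/ a = 1.
Proof. case: a => [[|[|k]] H]; [left; exact/val_inj | right; exact/val_inj | by []]. Qed.

Lemma F2_11 : (1 + 1 : 'F_2) = 0.
Proof. by apply/val_inj. Qed.

Lemma dimvec m : dim (vec m) = m.
Proof. rewrite dim_matrix; exact: mul1n. Qed.

Section S.
Variables (n m : nat) (f : vec n -> vec m).

Lemma dotE (a b : vec m) : dot a b = \sum_j a 0 j * b 0 j.
Proof. rewrite /dot !mxE; apply: eq_bigr => j _; by rewrite mxE. Qed.

Lemma dotBl (a b y : vec m) : dot (a - b) y = dot a y - dot b y.
Proof. rewrite !dotE -sumrB; apply: eq_bigr => j _; by rewrite !mxE mulrBl. Qed.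

Lemma dotDr (a y z : vec m) : dot a (y + z) = dot a y + dot a z.
Proof. rewrite !dotE -big_split; apply: eq_bigr => j _; by rewrite !mxE mulrDr. Qed.

Lemma dotZr (a y : vec m) k : dot a (k *: y) = k * dot a y.
Proof. rewrite !dotE mulr_sumr; apply: eq_bigr => j _; by rewrite !mxE mulrCA. Qed.

Lemma dotZl (a y : vec m) k : dot (k *: a) y = k * dot a y.
Proof. rewrite !dotE mulr_sumr; apply: eq_bigr => j _; by rewrite !mxE mulrA. Qed.

Lemma orth0 (a : vec m) : (forall y, dot a y = 0) -> a = 0.
Proof.
move=> H; apply/rowP => i; rewrite mxE.
have := H (delta_mx 0 i); rewrite dotE (bigD1 i) //= big1 ?addr0.
  by rewrite mxE !eqxx mulr1.
move=> j ji; by rewrite mxE eqxx /= (negbTE ji) mulr0.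
Qed.

Definition u x := f x - f (0 : vec n).

Lemma CfE y : (y \in Cf f) = [forall x, dot (u x) y == 0].
Proof.
rewrite inE /ycst; apply/forallP/forallP.
  move=> H x; apply/eqP; rewrite /u dotBl; move/forallP: (H x) => /(_ 0) /eqP ->.
  by rewrite subrr.
move=> H x; apply/forallP => x'; have := H x; have := H x'.
by rewrite /u !dotBl !subr_eq0 => /eqP -> /eqP ->.
Qed.

Definition K (a : vec m) : {vspace vec m} := lker (linfun (mulmxr (m := 1) a^T)).

Lemma memK a w : (w \in K a) = (dot a w == 0).
Proof.
rewrite memv_ker lfunE /= /dot.
have -> : w *m a^T = (a *m w^T)^T by rewrite trmx_mul trmxK.
apply/eqP/eqP.
  by move=> H; have := congr1 (fun M : 'M['F_2]_1 => M 0 0) H; rewrite !mxE.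
move=> H; apply/matrixP => i j; rewrite !ord1 [in LHS]mxE [in RHS]mxE; exact: H.
Qed.

Lemma span_Cf (C : seq (vec m)) : {subset C <= Cf f} -> {subset <<C>>%VS <= Cf f}.
Proof.
move=> HC w Hw; rewrite CfE; apply/forallP => x; rewrite -memK.
have : (<<C>> <= K (u x))%VS.
  by apply/span_subvP => c /HC; rewrite CfE memK => /forallP.
by move/subvP; apply.
Qed.

Lemma dim0 : (forall x, u x = 0) -> img_dim f = 0%N.
Proof.
move=> H; rewrite /img_dim; apply/eqP; rewrite dimv_eq0 -subv0.
apply/span_subvP => v /mapP [x _ ->]; rewrite memv0; apply/eqP; exact: H.
Qed.

Lemma dim_le1 : (forall x x', u x = 0 \/ u x' = 0 \/ u x = u x') -> (img_dim f <= 1)%N.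
Proof.
move=> H; case: (boolP [exists x, u x != 0]).
  move/existsP => [x1 nz].
  have sub : (<<[seq f x - f (0%R : vec n) | x : vec n]>> <= <[u x1]>)%VS.
    apply/span_subvP => v /mapP [x _ ->]; change (u x \in <[u x1]>%VS).
    case: (H x x1) => [-> | [h | ->]]; [exact: mem0v | by rewrite h eqxx in nz | exact: memv_line].
  rewrite /img_dim; apply: leq_trans (dimvS sub) _; by rewrite dim_vline leq_b1.
rewrite negb_exists => /forallP H0; rewrite dim0 // => x.
by move: (H0 x) => /negPn /eqP.
Qed.

Lemma L1 (y0 : vec m) :
  (forall y, exists c w, w \in Cf f /\ y = w + c *: y0) -> (img_dim f <= 1)%N.
Proof.
move=> H.
have key : forall y, exists c, forall x, dot (u x) y = c * dot (u x) y0.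
  move=> y; have [c [w [Hw ->]]] := H y; exists c => x.
  rewrite dotDr dotZr; move: Hw; rewrite CfE => /forallP /(_ x) /eqP ->.
  by rewrite add0r.
apply: dim_le1 => x x'.
case: (F2cases (dot (u x) y0)) => h1.
  left; apply: orth0 => y; have [c Hc] := key y; by rewrite Hc h1 mulr0.
case: (F2cases (dot (u x') y0)) => h2.
  right; left; apply: orth0 => y; have [c Hc] := key y; by rewrite Hc h2 mulr0.
right; right; apply/eqP; rewrite -subr_eq0; apply/eqP/orth0 => y.
have [c Hc] := key y; by rewrite dotBl !Hc h1 h2 subrr.
Qed.

Lemma Lb (s y : vec m) : img_dim f = 1%N -> s \notin Cf f -> y \notin Cf f -> s + y \in Cf f.
Proof.
move=> H1 hs hy.
have [x1 nz] : exists x1, u x1 != 0.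
  case: (boolP [exists x, u x != 0]) => [/existsP // | ].
  rewrite negb_exists => /forallP H0; move: H1; rewrite dim0 // => x.
  by move: (H0 x) => /negPn /eqP.
set V := <<[seq f x - f (0%R : vec n) | x : vec n]>>%VS.
have inV : forall x, u x \in V by move=> x; apply: memv_span; apply: map_f; rewrite mem_enum.
have eqV : <[u x1]>%VS = V.
  apply/eqP; rewrite eqEdim; apply/andP; split.
    by apply/subvP => v /vlineP [k ->]; apply: memvZ.
  by move: H1; rewrite /img_dim -/V => ->; rewrite dim_vline nz.
have kx : forall x, exists k, forall z, dot (u x) z = k * dot (u x1) z.
  move=> x; have := inV x; rewrite -eqV => /vlineP [k ->]; exists k => z; exact: dotZl.
have one : forall z, z \notin Cf f -> dot (u x1) z = 1.
  move=> z; rewrite CfE negb_forall => /existsP [x hx].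
  have [k Hk] := kx x; move: hx; rewrite Hk.
  by case: (F2cases (dot (u x1) z)) => -> //; rewrite mulr0 eqxx.
rewrite CfE; apply/forallP => x; have [k Hk] := kx x.
by rewrite Hk dotDr (one s hs) (one y hy) F2_11 mulr0.
Qed.


Lemma free_size (X : seq (vec m)) : free X -> (size X <= m)%N.
Proof. move/eqP <-; have := dimvS (subvf <<X>>); by rewrite dimvf dimvec. Qed.

Lemma notin_of_size (X : seq (vec m)) : (\dim <<X>> < m)%N -> exists y, y \notin <<X>>%VS.
Proof.
move=> Hlt; case: (boolP [exists y, y \notin <<X>>%VS]) => [/existsP//|].
rewrite negb_exists => /forallP H.
have : (fullv <= <<X>>)%VS by apply/subvP => y _; exact/negPn/H.
by move/dimvS; rewrite dimvf dimvec leqNgt Hlt.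
Qed.

Lemma stop1_ok (C B : seq (vec m)) : {subset C <= Cf f} -> free (C ++ B) ->
  size C = m.-1 -> (img_dim f <= 1)%N.
Proof.
move=> hC hfree hs.
case: (boolP [exists y0, y0 \notin <<C>>%VS]).
  move/existsP => [y0 hy0].
  have fr : free (y0 :: C) by rewrite free_cons hy0 (catl_free hfree).
  have sz : (size (y0 :: C) <= m)%N by apply: free_size.
  have full : <<y0 :: C>>%VS = fullv.
    apply/eqP; rewrite eqEdim subvf dimvf dimvec (eqP fr) /=.
    move: sz; rewrite /= hs; lia.
  apply: (L1 y0) => y.
  have : y \in <<y0 :: C>>%VS by rewrite full memvf.
  rewrite span_cons => /memv_addP [a /vlineP [c ->] [w hw ->]].
  exists c, w; split; [exact: span_Cf hC _ hw | by rewrite addrC].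
rewrite negb_exists => /forallP H.
apply: (L1 0) => y; exists 0, y; split.
  apply: span_Cf hC _ _; exact/negPn/H.
by rewrite scale0r addr0.
Qed.

Definition Inv (st : pstate m) : Prop :=
  match st with
  | Running C B q => {subset C <= Cf f} /\ free (C ++ B) /\
      (B = [::] \/ exists s, B = [:: s] /\ s \notin Cf f) /\
      (q <= 2 * size C + size B)%N
  | Stopped out q => out = img_dim f /\ (q <= 2 * m - 1)%N
  end.

Hypothesis Hr : img_dim f = 1%N \/ img_dim f = 2%N.

Lemma Inv_step st st' : Inv st -> proc_step f st st' -> Inv st'.
Proof.
move=> I H; case: st st' / H I.
- move=> C B q hs [hC [hfree [hB hq]]]; split.
    have Hle := stop1_ok C B hC hfree hs; case: Hr => E //; by rewrite E in Hle.
  have := free_size _ hfree; rewrite size_cat.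
  have hB1 : (size B <= 1)%N by case: hB => [->|[s [-> _]]].
  lia.
- move=> C B q y hs hy hyC [hC [hfree [hB hq]]]; split.
    by move=> c; rewrite inE => /orP [/eqP -> | /hC].
  split; first by rewrite cat_cons free_cons hy hfree.
  split=> //=; lia.
- move=> C q y hs hy hyC [hC [hfree [hB hq]]]; split=> //.
  rewrite cats0 in hfree.
  have pp : perm_eq (C ++ [:: y]) (y :: C) by rewrite perm_catC.
  split; first by rewrite (perm_free pp) free_cons hy hfree.
  split; first by right; exists y.
  move: hq => /=; lia.
- move=> C B q y s hs hy hyC hsB hsyC [hC [hfree [hB hq]]]; split.
    by move=> c; rewrite inE => /orP [/eqP -> | /hC].
  split.
    rewrite cat_cons free_cons hfree andbT; apply/negP => Hin; move/negP: hy; apply.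
    have hs' : s \in <<C ++ B>>%VS by apply: memv_span; rewrite mem_cat hsB orbT.
    have := memvB Hin hs'; by rewrite addrAC subrr add0r.
  split=> //=; lia.
- move=> C B q y s hs hy hyC hsB hsyC [hC [hfree [hB hq]]].
  have [s0 [eB hs0]] : exists s0, B = [:: s0] /\ s0 \notin Cf f.
    by case: hB => [eB | //]; rewrite eB in hsB.
  rewrite eB mem_seq1 in hsB; move/eqP: hsB => es; subst.
  split.
    case: Hr => // H1; move: hsyC; by rewrite (Lb s0 y H1 hs0 hyC).
  move: hs; rewrite -subn1 => hs; have := free_size _ hfree; rewrite size_cat /=; move: hq => /=. move=> h1 h2; have hs' : @size (vec m) C <> (m-1)%N := hs; lia.
Qed.

Lemma Inv_reach st : reachable f st -> Inv st.
Proof.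
move=> H; elim: (clos_rt_rtn1 _ _ _ _ H) => [|y z Hyz _ IH].
  split=> //; split; first by rewrite /= /free span_nil dimv0.
  by split; [left|].
exact: Inv_step IH Hyz.
Qed.


Lemma progress C B q : Inv (Running C B q) -> exists st', proc_step f (Running C B q) st'.
Proof.
move=> [hC [hfree [hB hq]]].
case: (eqVneq (size C) m.-1) => hs; first by exists (Stopped 1 q); constructor.
move/eqP: hs => hs.
have [y hy] : exists y, y \notin <<C ++ B>>%VS.
  apply: notin_of_size; rewrite (eqP hfree) size_cat.
  case: hB => [eB | [s [eB _]]]; rewrite eB /=.
    have := free_size _ hfree; rewrite eB cats0 => hle.
    rewrite addn0 ltn_neqAle hle andbT; apply/eqP => eC.
    have all : forall y, y \in Cf f.
      move=> y; apply: (span_Cf _ hC).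
      have -> : <<C>>%VS = fullv.
        apply/eqP; rewrite eqEdim subvf dimvf dimvec.
        rewrite eB cats0 in hfree. by rewrite (eqP hfree) eC leqnn.
      exact: memvf.
    have E0 : img_dim f = 0%N.
      apply: dim0 => x; apply: orth0 => z.
      by move: (all z); rewrite CfE => /forallP /(_ x) /eqP.
    by case: Hr; rewrite E0.
  have := free_size _ hfree; rewrite eB size_cat /= => hle.
  have hs' : @size (vec m) C <> m.-1 := hs.
  move: hs' hle; rewrite -subn1; set k := size C; lia.
case: (boolP (y \in Cf f)) => hyC.
  by exists (Running (y :: C) B q.+1); apply: step_addC.
case: hB => [eB | [s [eB _]]]; subst B.
  exists (Running C [:: y] q.+1); apply: step_addB => //; by rewrite cats0 in hy.
case: (boolP (s + y \in Cf f)) => hsy.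
  exists (Running (s + y :: C) [:: s] q.+2); apply: step_addC' => //; exact: mem_head.
exists (Stopped 2 q.+2); apply: (@step_stop2 n m f C [:: s] q y s) => //; exact: mem_head.
Qed.

End S.

Lemma step_sz n m (f : vec n -> vec m) st st' : proc_step f st st' ->
  match st, st' with
  | Running C B _, Running C' B' _ => (size C' + size B' = (size C + size B).+1)%N
  | _, _ => True end.
Proof. case: st st' / => //= *; by rewrite addn0 addn1. Qed.

Theorem mainTheorem9 (n m : nat) (f : vec n -> vec m) :
  fully_balanced f ->
  (img_dim f = 1%N \/ img_dim f = 2%N) ->
  (* every reachable running state can make a move (a valid y can be chosen) *)
  (forall C B q, reachable f (Running C B q) ->
     exists st', proc_step f (Running C B q) st') /\
  (* no infinite run: the procedure always stops *)
  ~ (exists g : nat -> pstate m, g 0%N = init_state m /\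
        forall k, proc_step f (g k) (g k.+1)) /\
  (* when it stops, the output is correct and at most 2m-1 queries were used *)
  (forall out q, reachable f (Stopped out q) ->
     out = img_dim f /\ (q <= 2 * m - 1)%N).
Proof.
move=> _ Hr; split.
  move=> C B q R; apply: progress => //; exact: (@Inv_reach n m f Hr _ R).
split; last by move=> out q R; exact: (@Inv_reach n m f Hr _ R).
move=> [g [g0 Hg]].
have reach : forall k, reachable f (g k).
  elim => [|k IH]; first by rewrite g0; apply: rt_refl.
  exact: rt_trans IH (rt_step _ _ _ _ (Hg k)).
have run : forall k, exists C B q, g k = Running C B q.
  move=> k; move: (Hg k); case: (g k) => [C B q | o q] H; first by exists C, B, q.
  inversion H.
have sz : forall k, exists C B q, g k = Running C B q /\ (k <= size C + size B)%N.
  elim => [|k [C [B [q [e le]]]]]; first by rewrite g0; exists [::], [::], 0%N.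
  have [C' [B' [q' e']]] := run k.+1.
  exists C', B', q'; split => //.
  have := @step_sz n m f _ _ (Hg k); rewrite e e' => ->; by rewrite ltnS.
have [C [B [q [e le]]]] := sz m.+1.
have := @Inv_reach n m f Hr _ (reach m.+1); rewrite e => -[_ [hfree _]].
have := @free_size m _ hfree; rewrite size_cat => H.
by have := leq_trans le H; rewrite ltnn.
Qed.
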